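(* In a search game (as defined in the context), represented via cell-units, let $B$ be a set of cell-units (possibly of various players), let $a\notin B$ be another cell-unit, and let $s^{1}$ be a cell-unit strategy profile under which every member of $B$ is best-responding. Then there exists a finite sequence of cell-unit improvements $s^{1},\ldots,s^{T}$ such that every member of $B\cup\{a\}$ is best-responding under $s^{T}$.
   Context: A search game has: a finite set of players $N$; a finite set $\Omega$ of locations; for each player $i$ a partition $\Pi_i$ of $\Omega$; a prior $\mu\in\Delta(\Omega)$ with $\mu(\pi_i)>0$ for all cells, and $\mu(\omega|\pi_i)=\mu(\omega)/\mu(\pi_i)$ for $\omega\in\pi_i$; capacities $K_i\in\mathbb{N}$; costs $c_i:\{0,\ldots,K_i\}\to\mathbb{R}_{\ge0}$ with $c_i(0)=0$ and nondecreasing increments $c_i(k+1)-c_i(k)\ge c_i(k)-c_i(k-1)$; rewards $v_i^m(\omega)\ge0$ with $v_i^{m+1}(\omega)\le v_i^m(\omega)$. A cell-unit of player $i$ is a pair $(\pi_i,j)$ with $\pi_i\in\Pi_i$ and $j\in\{1,\ldots,K_i\}$. A cell-unit strategy profile assigns to every cell-unit $(\pi_i,j)$ of every player either a location in $\pi_i$ or the symbol $\lambda$ (''inactive''), such that two distinct cell-units of the same cell are never assigned the same location. It induces the ordinary profile $s$ with $s_i(\pi_i)$ = set of locations assigned to the cell-units of $\pi_i$; let $m_s(\omega)$ be the number of players $i$ with $\omega\in s_i(\pi_i)$ for the cell $\pi_i\ni\omega$. The payoff of the cell $\pi_i$ (and of each of its cell-units) is $u_i(s|\pi_i)=\sum_{\omega\in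 s_i(\pi_i)}\mu(\omega|\pi_i)v_i^{m_s(\omega)}(\omega)-c_i(|s_i(\pi_i)|)$. A cell-unit is best-responding if no change of its own assignment alone (to another location of its cell not assigned to another cell-unit of the same cell, or to $\lambda$), holding all other assignments fixed, strictly increases the payoff of its cell. A sequence of cell-unit improvements is a sequence of cell-unit profiles in which each consecutive pair differs only in the assignment of a single cell-unit, and this change strictly increases the payoff of that cell-unit's cell. *)

(* Defs.v *)
From HB Require Import structures.
From mathcomp Require Import all_boot all_order all_algebra.
Set Implicit Arguments. Unset Strict Implicit. Unset Printing Implicit Defensive.
Import Order.TTheory GRing.Theory Num.Theory.
Local Open Scope ring_scope.

(* Data of a search game: players N, locations Omega (both finite),
   partitions P i, prior mu, capacities K, costs c, rewards v (v i m w = v_i^m(w)). *)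
Record search_game (N Omega : finType) (R : realFieldType) := SearchGame {
  P : N -> {set {set Omega}};
  mu : Omega -> R;
  K : N -> nat;
  c : N -> nat -> R;
  v : N -> nat -> Omega -> R
}.

Section Game.
Variables (N Omega : finType) (R : realFieldType) (g : search_game N Omega R).

Definition muset (A : {set Omega}) : R := \sum_(w in A) mu g w.

Definition is_search_game : Prop :=
  [/\ (forall i, partition (P g i) [set: Omega]),
      (forall w, 0 <= mu g w) /\ \sum_(w : Omega) mu g w = 1,
      (forall i pi, pi \in P g i -> 0 < muset pi),
      (forall i, c g i 0%N = 0) /\ (forall i k, (k <= K g i)%N -> 0 <= c g i k)
      /\ (forall i k, (1 <= k)%N -> (k + 1 <= K g i)%N ->
            c g i k - c g i k.-1 <= c g i k.+1 - c g i k)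
    & (forall i m w, 0 <= v g i m w) /\ (forall i m w, v g i m.+1 w <= v g i m w)].

(* Cell-units are triples (i, pi, j) with pi a cell of player i and 1 <= j <= K i. *)
Definition cu := (N * {set Omega} * nat)%type.

Definition is_cu (x : cu) : bool :=
  (x.1.2 \in P g x.1.1) && (0 < x.2 <= K g x.1.1)%N.

(* A cell-unit profile: s i pi j = Some w (assigned location) or None (lambda). *)
Definition profile := N -> {set Omega} -> nat -> option Omega.

(* Validity: values only on cell-units (None elsewhere, a normalisation),
   assigned locations lie in the cell, distinct cell-units of a cell get
   distinct locations. *)
Definition valid_profile (s : profile) : Prop :=
  [/\ (forall i pi j, ~~ is_cu (i, pi, j) -> s i pi j = None),
      (forall i pi j w, is_cu (i, pi, j) -> s i pi j = Some w -> w \in pi)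
    & (forall i pi j j' w, is_cu (i, pi, j) -> is_cu (i, pi, j') -> j <> j' ->
          s i pi j = Some w -> s i pi j' = Some w -> False)].

Definition cell_set (s : profile) (i : N) (pi : {set Omega}) : {set Omega} :=
  [set w | [exists j : 'I_(K g i), s i pi j.+1 == Some w]].

Definition mcount (s : profile) (w : Omega) : nat :=
  #|[set i : N | w \in cell_set s i (pblock (P g i) w)]|.

Definition payoff (s : profile) (i : N) (pi : {set Omega}) : R :=
  \sum_(w in cell_set s i pi) (mu g w / muset pi) * v g i (mcount s w) w
  - c g i #|cell_set s i pi|.

Definition upd (s : profile) (x : cu) (o : option Omega) : profile :=
  fun i pi j => if (i, pi, j) == x then o else s i pi j.

Definition allowed_dev (s : profile) (x : cu) (o : option Omega) : Prop :=
  o = None \/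
  exists w, o = Some w /\ w \in x.1.2 /\
    (forall j', is_cu (x.1.1, x.1.2, j') -> j' <> x.2 -> s x.1.1 x.1.2 j' <> Some w).

Definition best_responding (s : profile) (x : cu) : Prop :=
  forall o, allowed_dev s x o ->
    ~ (payoff s x.1.1 x.1.2 < payoff (upd s x o) x.1.1 x.1.2).

Definition improvement_step (s s' : profile) : Prop :=
  exists x : cu, [/\ is_cu x,
    (forall y : cu, y <> x -> s' y.1.1 y.1.2 y.2 = s y.1.1 y.1.2 y.2)
  & payoff s x.1.1 x.1.2 < payoff s' x.1.1 x.1.2].

End Game.

(* Main.v *)
Require Import Defs.
From HB Require Import structures.
From mathcomp Require Import all_boot all_order all_algebra.
From mathcomp Require Import zify ring lra.
From Stdlib Require Import Classical FunctionalExtensionality.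
Set Implicit Arguments. Unset Strict Implicit. Unset Printing Implicit Defensive.
Import Order.TTheory GRing.Theory Num.Theory.
Local Open Scope ring_scope.

Section Proof.
Variables (N Omega : finType) (R : realFieldType) (g : search_game N Omega R).
Hypothesis Hg : is_search_game g.

Notation prof := (profile N Omega).
Notation cuT := (cu N Omega).

Lemma is_cuE i pi j : is_cu g (i, pi, j) = (pi \in P g i) && (0 < j <= K g i)%N.
Proof. by []. Qed.

Lemma cuP i pi j : is_cu g (i, pi, j) ->
  [/\ pi \in P g i, (0 < j)%N & (j <= K g i)%N].
Proof. by rewrite is_cuE => /andP [-> /andP [-> ->]]. Qed.

Lemma cu_inS (s : prof) i pi j w :
  is_cu g (i, pi, j) -> s i pi j = Some w -> w \in cell_set g s i pi.
Proof.
rewrite is_cuE => /andP [_ /andP [j0 jK]] sj.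
rewrite inE; apply/existsP.
have jK' : (j.-1 < K g i)%N by lia.
exists (Ordinal jK'); rewrite /= prednK //; exact/eqP.
Qed.

Lemma inS_ex (s : prof) i pi w :
  pi \in P g i -> w \in cell_set g s i pi ->
  exists j, is_cu g (i, pi, j) /\ s i pi j = Some w.
Proof.
move=> piP; rewrite inE => /existsP [j /eqP sj].
exists j.+1; split => //; rewrite is_cuE piP /=; have := ltn_ord j; lia.
Qed.

Lemma cs_upd_other (s : prof) i pi j o i' pi' :
  (i', pi') != (i, pi) ->
  cell_set g (upd s (i, pi, j) o) i' pi' = cell_set g s i' pi'.
Proof.
move=> ne; apply/setP => w; rewrite !inE; apply: eq_existsb => j'.
rewrite /upd; case: ifP => [/eqP [e1 e2 _]|//].
by move: ne; rewrite -e1 -e2 eqxx.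
Qed.

Lemma cs_upd (s : prof) i pi j o w :
  valid_profile g s -> is_cu g (i, pi, j) ->
  (w \in cell_set g (upd s (i, pi, j) o) i pi) =
  ((w \in cell_set g s i pi) && (s i pi j != Some w)) || (o == Some w).
Proof.
case=> [V1 V2 V3] xcu.
have piP : pi \in P g i by move: xcu; rewrite is_cuE => /andP [].
apply/idP/idP.
- rewrite inE => /existsP [j' /eqP].
  rewrite /upd; case: eqP => [[e]|ne] h.
  + by rewrite h eqxx orbT.
  + apply/orP; left; apply/andP; split.
    * rewrite inE; apply/existsP; exists j'; exact/eqP.
    * apply/eqP => sj.
      have cu' : is_cu g (i, pi, j'.+1) by rewrite is_cuE piP /=; have := ltn_ord j'; lia.
      apply: (V3 i pi j j'.+1 w xcu cu' _ sj h).
      by move=> ej; apply: ne; rewrite ej.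
- case/orP => [/andP [wS sjw] | /eqP ow].
  + case: (inS_ex piP wS) => j' [cu' sj'].
    have nej : j' <> j by move=> ej; move: sjw; rewrite -ej sj' eqxx.
    rewrite inE; apply/existsP.
    have [_ j'0 j'K0] := cuP cu'.
    have j'K : (j'.-1 < K g i)%N by lia.
    exists (Ordinal j'K); rewrite /upd /=.
    rewrite prednK //; case: ifP => [/eqP [ej]|_]; first by exfalso; apply: nej.
    by rewrite sj'.
  + have [_ j0 jK0] := cuP xcu.
    have jK : (j.-1 < K g i)%N by lia.
    rewrite inE; apply/existsP; exists (Ordinal jK); rewrite /upd /= prednK //.
    by rewrite eqxx ow.
Qed.


Lemma card_agree (T : finType) (A A' : {set T}) x :
  (forall y, y != x -> (y \in A') = (y \in A)) ->
  (#|A'| + (x \in A) = #|A| + (x \in A'))%N.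
Proof.
move=> H; rewrite (cardsD1 x A) (cardsD1 x A').
have -> : A' :\ x = A :\ x.
  by apply/setP => y; rewrite !inE; case: (eqVneq y x) => //= ne; rewrite H.
lia.
Qed.

Lemma allowedSome (s : prof) i pi j w :
  allowed_dev g s (i, pi, j) (Some w) ->
  w \in pi /\ (forall j', is_cu g (i, pi, j') -> j' <> j -> s i pi j' <> Some w).
Proof. by case=> [//|[w' [[<-] [H1 H2]]]]. Qed.

Lemma allowed_notin (s : prof) i pi j w :
  is_cu g (i, pi, j) -> allowed_dev g s (i, pi, j) (Some w) -> s i pi j != Some w ->
  w \notin cell_set g s i pi.
Proof.
move=> xcu /allowedSome [_ H] ne; apply/negP => wS.
have [piP _ _] := cuP xcu.
case: (inS_ex piP wS) => j' [cu' sj'].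
have nej : j' <> j by move=> ej; move: ne; rewrite -ej sj' eqxx.
exact: (H j' cu' nej sj').
Qed.

Lemma trivP i : trivIset (P g i).
Proof. by case: Hg => /(_ i) /and3P [_ -> _]. Qed.

Lemma coverP i : cover (P g i) = [set: Omega].
Proof. by case: Hg => /(_ i) /and3P [/eqP -> _ _]. Qed.

Lemma mcount_upd (s : prof) i pi j o w :
  valid_profile g s -> is_cu g (i, pi, j) -> allowed_dev g s (i, pi, j) o ->
  o != s i pi j ->
  (mcount g (upd s (i, pi, j) o) w + (s i pi j == Some w) =
   mcount g s w + (o == Some w))%N.
Proof.
move=> V xcu al ne.
have [piP _ _] := cuP xcu.
rewrite /mcount.
set A := [set i' | _ \in cell_set g s _ _].
set A' := [set i' | _ \in cell_set g (upd _ _ _) _ _].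
have out : forall i', i' != i -> (i' \in A') = (i' \in A).
  move=> i' ne'; rewrite !inE; apply: eq_existsb => j0.
  rewrite /upd; case: ifP => // /eqP [e].
  by move: ne'; rewrite -e eqxx.
have C := card_agree out.
suff Mi : ((i \in A') + (s i pi j == Some w) = (i \in A) + (o == Some w))%N by lia.
rewrite [i \in A']inE [i \in A]inE.
case wpi: (w \in pi).
- rewrite (def_pblock (trivP i) piP wpi) cs_upd //.
  case: (eqVneq o (Some w)) => [ow|onw].
  + have wS : w \notin cell_set g s i pi.
      by apply: (allowed_notin xcu); [rewrite -ow | rewrite eq_sym -ow].
    rewrite (negbTE wS) /=.
    have -> : (s i pi j == Some w) = false by apply/eqP => e; move: ne; rewrite ow e eqxx.
    by [].
  + rewrite orbF.
    case: (eqVneq (s i pi j) (Some w)) => [sw|snw] /=.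
    * by rewrite andbF (cu_inS xcu sw).
    * by rewrite andbT.
- have nb : (i, pblock (P g i) w) != (i, pi).
    apply/negP => /eqP [e].
    have : w \in pblock (P g i) w by rewrite mem_pblock coverP inE.
    by rewrite e wpi.
  rewrite cs_upd_other //.
  have -> : (s i pi j == Some w) = false.
    apply/negP => /eqP sw; case: V => _ V2 _.
    by move: (V2 _ _ _ _ xcu sw); rewrite wpi.
  have -> : (o == Some w) = false.
    apply/negP => /eqP ow; move: al; rewrite ow => /allowedSome [wp _].
    by move: wp; rewrite wpi.
  by [].
Qed.


Lemma cs_le_K (s : prof) i pi : (#|cell_set g s i pi| <= K g i)%N.
Proof.
pose f (j : 'I_(K g i)) := s i pi j.+1.
have e : #|cell_set g s i pi| = #|[set Some w | w in cell_set g s i pi]|.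
  by rewrite card_imset //; move=> a b [].
rewrite e; apply: (@leq_trans #|[set f x | x in [set: 'I_(K g i)]]|); last first.
  by apply: leq_trans (leq_imset_card f _) _; rewrite cardsT card_ord.
apply: subset_leq_card; apply/subsetP => x /imsetP [w wS ->].
rewrite inE in wS; case/existsP: wS => j /eqP sj.
by apply/imsetP; exists j; rewrite ?inE // /f sj.
Qed.

Lemma cs_upd_eq (s : prof) i pi j o :
  valid_profile g s -> is_cu g (i, pi, j) -> allowed_dev g s (i, pi, j) o ->
  o != s i pi j ->
  cell_set g (upd s (i, pi, j) o) i pi =
  match s i pi j, o with
  | Some w0, Some w1 => w1 |: (cell_set g s i pi :\ w0)
  | Some w0, None => cell_set g s i pi :\ w0
  | None, Some w1 => w1 |: cell_set g s i pi
  | None, None => cell_set g s i pi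
  end.
Proof.
move=> V xcu al ne; apply/setP => w; rewrite cs_upd //.
case: (s i pi j) => [w0|]; case: o {al ne} => [w1|]; rewrite !inE //=;
  rewrite ?(inj_eq (@Some_inj _)); set E := [exists _, _].
- by rewrite (eq_sym w1) (eq_sym w0); case: E; case: (w == w0); case: (w == w1).
- by rewrite (eq_sym w0); case: E; case: (w == w0).
- by rewrite (eq_sym w1); case: E; case: (w == w1).
- by case: E.
Qed.

Definition Gv i (pi : {set Omega}) w n : R := mu g w / muset g pi * v g i n w.
Definition dc i k : R := c g i k - c g i k.-1.
Definition hv i n : R := dc i (K g i - n.-1).
Definition Pv i pi (o : option Omega) n : R :=
  if o is Some w then Gv i pi w n else hv i n.
Definition load (s : prof) i pi (o : option Omega) : nat :=
  if o is Some w then mcount g s w else (K g i - #|cell_set g s i pi|)%N.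

Lemma payoffE (s : prof) i pi :
  payoff g s i pi =
  \sum_(w in cell_set g s i pi) Gv i pi w (mcount g s w) - c g i #|cell_set g s i pi|.
Proof. by []. Qed.

Lemma payoff_upd (s : prof) i pi j o :
  valid_profile g s -> is_cu g (i, pi, j) -> allowed_dev g s (i, pi, j) o ->
  o != s i pi j ->
  payoff g (upd s (i, pi, j) o) i pi =
  payoff g s i pi + Pv i pi o (load s i pi o).+1
  - Pv i pi (s i pi j) (load s i pi (s i pi j)).
Proof.
move=> V xcu al ne.
have M := fun w => mcount_upd w V xcu al ne.
have E := cs_upd_eq V xcu al ne.
have KS := cs_le_K (upd s (i, pi, j) o) i pi.
rewrite !payoffE E in KS *.
set S := cell_set g s i pi.
move: M ne al E KS.
case sx: (s i pi j) => [w0|]; case: o => [w1|] M ne al E KS //=.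
-
  have w0S : w0 \in S by exact: (cu_inS xcu sx).
  have w1S : w1 \notin S by apply: (allowed_notin xcu al); rewrite sx eq_sym.
  have w1S' : w1 \notin S :\ w0 by rewrite in_setD1 negb_and w1S orbT.
  rewrite big_setU1 //= (big_setD1 _ w0S) /=.
  have -> : \sum_(i0 in S :\ w0) Gv i pi i0 (mcount g (upd s (i, pi, j) (Some w1)) i0) =
            \sum_(i0 in S :\ w0) Gv i pi i0 (mcount g s i0).
    apply: eq_bigr => z; rewrite in_setD1 => /andP [zw0 zS].
    have := M z.
    have -> : (Some w0 == Some z) = false by apply/eqP => [[e]]; move: zw0; rewrite e eqxx.
    have -> : (Some w1 == Some z) = false.
      by apply/eqP => [[e]]; move: w1S; rewrite e zS.
    by rewrite !addn0 => ->.
  have -> : mcount g (upd s (i, pi, j) (Some w1)) w1 = (mcount g s w1).+1.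
    have := M w1; rewrite eqxx.
    have -> : (Some w0 == Some w1) = false by apply/eqP => e; move: ne; rewrite e eqxx.
    by rewrite addn0 addn1.
  rewrite cardsU1 w1S' /= (cardsD1 w0 S) w0S /= add1n.
  rewrite /Pv /Gv; lra.
-
  have w0S : w0 \in S by exact: (cu_inS xcu sx).
  rewrite (big_setD1 _ w0S) /=.
  have -> : \sum_(i0 in S :\ w0) Gv i pi i0 (mcount g (upd s (i, pi, j) None) i0) =
            \sum_(i0 in S :\ w0) Gv i pi i0 (mcount g s i0).
    apply: eq_bigr => z; rewrite in_setD1 => /andP [zw0 zS].
    have := M z.
    have -> : (Some w0 == Some z) = false by apply/eqP => [[e]]; move: zw0; rewrite e eqxx.
    by rewrite !addn0 => ->.
  have SK := cs_le_K s i pi.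
  rewrite -/S in SK.
  rewrite (cardsD1 w0 S) w0S /= add1n /= /Pv /hv /dc.
  have -> : (K g i - (K g i - #|S :\ w0|.+1).+1.-1 = #|S :\ w0|.+1)%N.
    rewrite (cardsD1 w0 S) w0S /= add1n in SK; lia.
  rewrite /=; lra.
-
  have w1S : w1 \notin S by apply: (allowed_notin xcu al); rewrite sx eq_sym.
  rewrite big_setU1 //=.
  have -> : \sum_(i0 in S) Gv i pi i0 (mcount g (upd s (i, pi, j) (Some w1)) i0) =
            \sum_(i0 in S) Gv i pi i0 (mcount g s i0).
    apply: eq_bigr => z zS.
    have := M z.
    have -> : (Some w1 == Some z) = false.
      by apply/eqP => [[e]]; move: w1S; rewrite e zS.
    by rewrite /= !addn0 => ->.
  have -> : mcount g (upd s (i, pi, j) (Some w1)) w1 = (mcount g s w1).+1.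
    have := M w1; rewrite eqxx.
    by rewrite addn0 addn1.
  rewrite cardsU1 w1S /= add1n in KS *.
  rewrite /Pv /hv /dc -/S.
  rewrite -/S in KS; have -> : (K g i - (K g i - #|S|).-1 = #|S|.+1)%N by lia.
  rewrite /=; lra.
Qed.


Definition gres := (Omega + (N * {set Omega}))%type.
Definition res i pi (o : option Omega) : gres :=
  if o is Some w then inl w else inr (i, pi).

Lemma res_inj i pi o1 o2 : res i pi o1 = res i pi o2 -> o1 = o2.
Proof. by case: o1 => [a|]; case: o2 => [b|] //= [->]. Qed.

Lemma card_upd (s : prof) i pi j o :
  valid_profile g s -> is_cu g (i, pi, j) -> allowed_dev g s (i, pi, j) o ->
  o != s i pi j ->
  (#|cell_set g (upd s (i, pi, j) o) i pi| + (s i pi j != None) =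
   #|cell_set g s i pi| + (o != None))%N.
Proof.
move=> V xcu al ne; rewrite cs_upd_eq //.
move: al ne; case sx: (s i pi j) => [w0|]; case: o => [w1|] al ne //=.
- have w0S : w0 \in cell_set g s i pi by exact: (cu_inS xcu sx).
  have w1S : w1 \notin cell_set g s i pi by apply: (allowed_notin xcu al); rewrite sx eq_sym.
  rewrite cardsU1 in_setD1 negb_and w1S orbT (cardsD1 w0 (cell_set g s i pi)) w0S /=; lia.
- have w0S : w0 \in cell_set g s i pi by exact: (cu_inS xcu sx).
  rewrite (cardsD1 w0 (cell_set g s i pi)) w0S /=; lia.
- have w1S : w1 \notin cell_set g s i pi by apply: (allowed_notin xcu al); rewrite sx eq_sym.
  rewrite cardsU1 w1S /=; lia.
Qed.

Lemma load_upd (s : prof) i pi j o i' pi' o' :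
  valid_profile g s -> is_cu g (i, pi, j) -> allowed_dev g s (i, pi, j) o ->
  o != s i pi j ->
  (load (upd s (i, pi, j) o) i' pi' o' + (res i' pi' o' == res i pi (s i pi j)) =
   load s i' pi' o' + (res i' pi' o' == res i pi o))%N.
Proof.
move=> V xcu al ne.
have inlE : forall w (q : option Omega), (inl w == res i pi q) = (q == Some w).
  by move=> w [q|] //=; rewrite eq_sym.
case: o' => [w|] /=.
- by rewrite !inlE; exact: mcount_upd.
- case: (eqVneq (i', pi') (i, pi)) => [[-> ->]|nc].
  + have C := card_upd V xcu al ne.
    have K1 := cs_le_K (upd s (i, pi, j) o) i pi.
    have K2 := cs_le_K s i pi.
    have inrE : forall (q : option Omega), (inr (i, pi) == res i pi q) = (q == None).
      by move=> [q|] //=; rewrite eqxx.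
    rewrite !inrE.
    move: C K1 K2; clear al ne; case: (s i pi j) => [?|]; case: o => [?|] /= *; lia.
  + rewrite cs_upd_other //.
    have inrE : forall (q : option Omega), (inr (i', pi') == res i pi q) = false.
      move=> [q|] //=; apply/negP => /eqP [e1 e2]; move: nc; rewrite e1 e2 eqxx //.
    by rewrite !inrE.
Qed.

Lemma valid_upd (s : prof) i pi j o :
  valid_profile g s -> is_cu g (i, pi, j) -> allowed_dev g s (i, pi, j) o ->
  valid_profile g (upd s (i, pi, j) o).
Proof.
case=> V1 V2 V3 xcu al; split.
- move=> i' pi' j' ncu; rewrite /upd; case: ifP => [/eqP e|_]; last exact: V1.
  by move: ncu; rewrite e xcu.
- move=> i' pi' j' w ycu; rewrite /upd; case: ifP => [/eqP [e1 e2 e3]|_]; last exact: V2.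
  move=> ow; move: al; rewrite ow => /allowedSome [wp _]; by rewrite e2.
- move=> i' pi' j1 j2 w c1 c2 ne12; rewrite /upd.
  case: ifP => [/eqP [e1 e2 e3]|n1]; case: ifP => [/eqP [f1 f2 f3]|n2].
  + by move=> _ _; apply: ne12; rewrite e3 f3.
  + move=> ow; move: al; rewrite ow => /allowedSome [_ H].
    subst i' pi' j1; apply: (H j2 c2) => e; exact: ne12 (esym e).
  + move=> s1 ow; move: al; rewrite ow => /allowedSome [_ H].
    subst i' pi' j2; exact: (H j1 c1 ne12 s1).
  + exact: V3 c1 c2 ne12.
Qed.

Lemma step_upd (s : prof) i pi j o :
  is_cu g (i, pi, j) ->
  payoff g s i pi < payoff g (upd s (i, pi, j) o) i pi ->
  improvement_step g s (upd s (i, pi, j) o).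
Proof.
move=> xcu lt; exists (i, pi, j); split => //.
move=> [[a b] d] ne /=; rewrite /upd; case: ifP => // /eqP e; by exfalso; apply: ne.
Qed.

Lemma upd_id (s : prof) i pi j : upd s (i, pi, j) (s i pi j) = s.
Proof.
apply: functional_extensionality => a; apply: functional_extensionality => b.
apply: functional_extensionality => d; rewrite /upd; case: ifP => // /eqP [-> -> ->] //.
Qed.

Lemma allowed_upd (s : prof) i pi j o0 iw piw jw o :
  allowed_dev g (upd s (i, pi, j) o0) (iw, piw, jw) o ->
  allowed_dev g s (iw, piw, jw) o \/
  [/\ iw = i, piw = pi, jw <> j & o = s i pi j].
Proof.
case: o => [z|]; last by left; left.
move=> /allowedSome [zp H].
case: (classic ([/\ iw = i, piw = pi, jw <> j & Some z = s i pi j])) => [h|h]; first by right.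
left; right; exists z; split => //; split => // j' cu' ne' /= e.
case: (eqVneq (iw, piw, j') (i, pi, j)) => [[e1 e2 e3]|nx].
- by apply: h; split => //; [ move=> ejw; apply: ne'; rewrite ejw e3 | rewrite -e e1 e2 e3 ].
- apply: (H j' cu' ne'); rewrite /upd /= ifN //.
Qed.

Lemma allowed_team (s : prof) i pi j jw y :
  allowed_dev g s (i, pi, j) y -> y != s i pi j -> allowed_dev g s (i, pi, jw) y.
Proof.
case: y => [z|]; last by left.
move=> /allowedSome [zp H] ne; right; exists z; split => //; split => // j' cu' ne' /=.
case: (eqVneq j' j) => [->|nj]; first by move=> e; move: ne; rewrite e eqxx.
exact: (H j' cu' (elimN eqP nj)).
Qed.


Lemma dc_step i k : (k.+1 <= K g i)%N -> dc i k <= dc i k.+1.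
Proof.
move=> kK; case: Hg => _ _ _ [c0 [cnn cvx]] _.
case: k kK => [|k] kK.
- rewrite /dc /= c0 !subrr subr0; apply: cnn; lia.
- have := cvx i k.+1 (isT : (1 <= k.+1)%N); rewrite addn1 => /(_ kK).
  by rewrite /dc.
Qed.

Lemma dc_mono i a b : (a <= b)%N -> (b <= K g i)%N -> dc i a <= dc i b.
Proof.
move=> ab bK; elim: b ab bK => [|b IH] ab bK.
- by have -> : a = 0%N by lia.
- case: (eqVneq a b.+1) => [->//|nab].
  apply: le_trans (IH _ _) (dc_step _); lia.
Qed.

Lemma v_mono i w m n : (m <= n)%N -> v g i n w <= v g i m w.
Proof.
case: Hg => _ _ _ _ [_ vdec].
move=> mn; elim: n mn => [|n IH] mn.
- by have -> : m = 0%N by lia.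
- case: (eqVneq m n.+1) => [->//|nmn].
  apply: le_trans (vdec _ _ _) (IH _); lia.
Qed.

Lemma Pv_mono i pi j o m n :
  is_cu g (i, pi, j) -> (m <= n)%N -> Pv i pi o n <= Pv i pi o m.
Proof.
move=> xcu mn; have [piP j0 jK] := cuP xcu.
case: o => [w|] /=.
- rewrite /Gv; apply: ler_wpM2l; last exact: v_mono.
  case: Hg => _ [mu0 _] mpos _ _.
  apply: divr_ge0; [exact: mu0 | exact: ltW (mpos _ _ piP)].
- rewrite /hv; apply: dc_mono; lia.
Qed.



Lemma fin_max (T : finType) (P : T -> Prop) (f : T -> R) x0 :
  P x0 -> exists x, P x /\ forall y, P y -> f y <= f x.
Proof.
move=> Px0.
suff H : forall l : seq T, (exists2 x, x \in l & P x) ->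
  exists x, [/\ P x, x \in l & forall y, y \in l -> P y -> f y <= f x].
  have [|x [Px _ Hx]] := H (enum T); first by exists x0; rewrite ?mem_enum.
  by exists x; split => // y Py; apply: Hx; rewrite ?mem_enum.
elim=> [[x]//|z l IH] ex.
case: (classic (exists2 x, x \in l & P x)) => [exl|nexl].
- have [x [Px xl Hx]] := IH exl.
  case: (classic (P z)) => Pz.
  + case: (leP (f z) (f x)) => fzx.
    * exists x; split => //; first by rewrite inE xl orbT.
      by move=> y; rewrite inE => /orP [/eqP ->|yl] //; exact: Hx.
    * exists z; split => //; first by rewrite inE eqxx.
      move=> y; rewrite inE => /orP [/eqP ->|yl] Py //.
      exact: le_trans (Hx y yl Py) (ltW fzx).
  + exists x; split => //; first by rewrite inE xl orbT.
    by move=> y; rewrite inE => /orP [/eqP ->|yl] Py //; exact: Hx.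
- have Pz : P z.
    case: ex => x; rewrite inE => /orP [/eqP ->//|xl] Px; by exfalso; apply: nexl; exists x.
  exists z; split => //; first by rewrite inE eqxx.
  move=> y; rewrite inE => /orP [/eqP ->|yl] Py //.
  by exfalso; apply: nexl; exists y.
Qed.

Lemma sum_lt (I : finType) (f h : I -> nat) i0 :
  (forall i, (f i <= h i)%N) -> (f i0 < h i0)%N ->
  (\sum_(i : I) f i < \sum_(i : I) h i)%N.
Proof.
move=> le lt; rewrite (bigD1 i0) //= [X in (_ < X)%N](bigD1 i0) //=.
rewrite -addSn; apply: leq_add => //; apply: leq_sum => i _; exact: le.
Qed.

Lemma sum_le (I : finType) (f h : I -> nat) :
  (forall i, (f i <= h i)%N) -> (\sum_(i : I) f i <= \sum_(i : I) h i)%N.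
Proof. by move=> le; apply: leq_sum => i _; exact: le. Qed.

Inductive reach : prof -> prof -> Prop :=
| reach0 s : reach s s
| reachS s s' s'' : improvement_step g s s' -> valid_profile g s' -> reach s' s'' -> reach s s''.

Lemma reach_seq s s' : valid_profile g s -> reach s s' ->
  exists (T : nat) (sq : nat -> prof),
    [/\ sq 0%N = s, (forall t, (t <= T)%N -> valid_profile g (sq t)),
        (forall t, (t < T)%N -> improvement_step g (sq t) (sq t.+1)) & sq T = s'].
Proof.
move=> V r; elim: r V => [s0|s0 s2 s3 st V2 r IH] V0.
- by exists 0%N, (fun _ => s0); split => // t; rewrite leqn0 => /eqP ->.
- have [T [sq [e0 Vs Ss eT]]] := IH V2.
  exists T.+1, (fun t => if t is t'.+1 then sq t' else s0); split => //.
  + by case=> [|t] //= tT; apply: Vs.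
  + by case=> [|t] /= tT; [rewrite e0 | apply: Ss].
Qed.

Section Main.
Variables (B : cuT -> Prop) (a : cuT) (s1 : prof).
Hypothesis HB : forall b, B b -> is_cu g b.
Hypothesis Ha : is_cu g a.

Definition Mu (b : cuT) := B b \/ b = a.

Lemma Mcu i pi j : Mu (i, pi, j) -> is_cu g (i, pi, j).
Proof. by case=> [/HB //|->]. Qed.

Definition Nb i pi o := load s1 i pi o.

Definition BH (s : prof) i pi j :=
  forall o, allowed_dev g s (i, pi, j) o -> o <> s i pi j ->
  Pv i pi o (Nb i pi o).+1 <= Pv i pi (s i pi j) (Nb i pi (s i pi j)).

Definition Dlt (s : prof) (t h : gres) :=
  forall i pi o, (load s i pi o + (res i pi o == h) = Nb i pi o + (res i pi o == t))%N.

Lemma Dlt_le1 s t h i pi o : Dlt s t h -> (load s i pi o <= (Nb i pi o).+1)%N.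
Proof. by move=> /(_ i pi o); case: (_ == h); case: (_ == t) => /=; lia. Qed.

Lemma Dlt_ge1 s t h i pi o : Dlt s t h -> (Nb i pi o <= (load s i pi o).+1)%N.
Proof. by move=> /(_ i pi o); case: (_ == h); case: (_ == t) => /=; lia. Qed.

Lemma Dlt_nt s t h i pi o : Dlt s t h -> res i pi o != t -> (load s i pi o <= Nb i pi o)%N.
Proof. by move=> /(_ i pi o) D /negbTE nt; move: D; rewrite nt; case: (_ == h) => /=; lia. Qed.

Lemma Dlt_nh s t h i pi o : Dlt s t h -> res i pi o != h -> (Nb i pi o <= load s i pi o)%N.
Proof. by move=> /(_ i pi o) D /negbTE nh; move: D; rewrite nh; case: (_ == t) => /=; lia. Qed.

Lemma Dlt_eq s t i pi o : Dlt s t t -> load s i pi o = Nb i pi o.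
Proof. by move=> /(_ i pi o); case: (_ == t) => /=; lia. Qed.

Definition TMy (s : prof) i pi j y :=
  forall jw, Mu (i, pi, jw) -> jw <> j -> allowed_dev g s (i, pi, jw) y ->
  y <> s i pi jw ->
  Pv i pi (s i pi j) (load s i pi (s i pi j)) <=
  Pv i pi (s i pi jw) (load s i pi (s i pi jw)).

Lemma move_BH (s : prof) t h i pi j y :
  valid_profile g s -> Dlt s t h -> is_cu g (i, pi, j) ->
  (forall i' pi' j', Mu (i', pi', j') -> (i', pi', j') <> (i, pi, j) -> BH s i' pi' j') ->
  (BH s i pi j \/ t = h) ->
  allowed_dev g s (i, pi, j) y -> y != s i pi j ->
  (forall o, allowed_dev g s (i, pi, j) o -> o != s i pi j ->
     Pv i pi o (load s i pi o).+1 <= Pv i pi y (load s i pi y).+1) ->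
  Pv i pi (s i pi j) (load s i pi (s i pi j)) < Pv i pi y (load s i pi y).+1 ->
  ((Nb i pi y <= load s i pi y)%N \/ TMy s i pi j y) ->
  forall i' pi' j', Mu (i', pi', j') -> BH (upd s (i, pi, j) y) i' pi' j'.
Proof.
move=> V D xcu BHo BHx aly ney best imp team i' pi' j' Mw o al' ne'.
set x0 := s i pi j in ney best imp team BHx.
have PM := fun o m n => @Pv_mono i pi j o m n xcu.
have c1 : Pv i pi y (load s i pi y).+1 <= Pv i pi y (Nb i pi y).
  apply: PM; exact: Dlt_ge1 D.
have c2 : Pv i pi x0 (Nb i pi x0).+1 <= Pv i pi x0 (load s i pi x0).
  apply: PM; exact: Dlt_le1 D.
case: (eqVneq (i', pi', j') (i, pi, j)) => [[e1 e2 e3]|nx].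
-
  subst i' pi' j'.
  rewrite /upd eqxx in ne' *.
  case: (allowed_upd al') => [al|[_ _ f _]]; last by exfalso; apply: f.
  case: (eqVneq o x0) => [->|nox].
  + apply: le_trans c2 _; apply: le_trans (ltW imp) c1.
  + case: (leqP (load s i pi o) (Nb i pi o)) => lo.
    * apply: le_trans (PM o (load s i pi o).+1 (Nb i pi o).+1 _) _; first by rewrite ltnS.
      apply: le_trans (best o al nox) c1.
    * have rot : res i pi o == t.
        by move: (D i pi o); case: (_ == h); case: (_ == t) => //=; lia.
      have nth : t != h.
        apply/negP => /eqP eth; move: (D i pi o); rewrite eth; case: (_ == h) => /=; lia.
      case: BHx => [BHx|eth]; last by move: nth; rewrite eth eqxx.
      apply: le_trans (BHx o al (elimN eqP nox)) _.
      have rx0 : res i pi x0 != t.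
        apply/negP => /eqP e; move: nox; rewrite (res_inj (etrans e (esym (eqP rot)))) eqxx //.
      apply: le_trans (PM _ _ _ (Dlt_nt D rx0)) _.
      exact: le_trans (ltW imp) c1.
-
  have sw : upd s (i, pi, j) y i' pi' j' = s i' pi' j' by rewrite /upd ifN.
  rewrite sw in ne' *.
  case: (allowed_upd al') => [al|[e1 e2 njj eo]].
  + exact: (BHo i' pi' j' Mw (elimN eqP nx) o al ne').
  + subst i' pi' o.
    set z := s i pi j' in ne' *.
    have c3 : Pv i pi x0 (Nb i pi x0).+1 < Pv i pi y (Nb i pi y).
      exact: le_lt_trans c2 (lt_le_trans imp c1).
    case: (eqVneq z y) => [zy|nzy]; first by rewrite zy; exact: ltW.
    have alw : allowed_dev g s (i, pi, j') y by apply: allowed_team aly ney.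
    case: (leqP (Nb i pi y) (load s i pi y)) => ly.
    * have tb := BHo i pi j' Mw (fun e => njj (congr1 (fun x : cuT => x.2) e)) y alw
                   (fun e => elimN eqP nzy (esym e)).
      apply: le_trans tb; apply: le_trans c2 _; apply: ltW; apply: lt_le_trans imp _.
      apply: PM; by rewrite ltnS.
    * case: team => [ly'|tm]; first by move: ly; rewrite ltnNge ly'.
      have ryh : res i pi y == h.
        by move: (D i pi y); case: (_ == h); case: (_ == t) => //=; lia.
      have rzh : res i pi z != h.
        apply/negP => /eqP e; move: nzy; rewrite (res_inj (etrans e (esym (eqP ryh)))) eqxx //.
      have tmz := tm j' Mw njj alw (fun e => elimN eqP nzy (esym e)).
      apply: le_trans c2 _; apply: le_trans tmz _.
      apply: PM; exact: Dlt_nh D rzh.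
Qed.


Lemma Dlt_move (s : prof) t h i pi j y :
  valid_profile g s -> is_cu g (i, pi, j) -> allowed_dev g s (i, pi, j) y ->
  y != s i pi j -> Dlt s t h ->
  (res i pi (s i pi j) = t -> Dlt (upd s (i, pi, j) y) (res i pi y) h) /\
  (res i pi y = h -> Dlt (upd s (i, pi, j) y) t (res i pi (s i pi j))).
Proof.
move=> V xcu al ne D; split => [et|eh] i' pi' o.
- have L := load_upd i' pi' o V xcu al ne; have D' := D i' pi' o.
  rewrite et in L; move: L D'.
  case: (res i' pi' o == t); case: (res i' pi' o == h); case: (res i' pi' o == res i pi y) => /=; lia.
- have L := load_upd i' pi' o V xcu al ne; have D' := D i' pi' o.
  rewrite eh in L; move: L D'.
  case: (res i' pi' o == t); case: (res i' pi' o == h);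
    case: (res i' pi' o == res i pi (s i pi j)) => /=; lia.
Qed.

Lemma Dlt_init t : Dlt s1 t t.
Proof. by move=> i pi o; rewrite /Nb. Qed.

Lemma gainE (s : prof) i pi j o :
  valid_profile g s -> is_cu g (i, pi, j) -> allowed_dev g s (i, pi, j) o ->
  o != s i pi j ->
  (payoff g s i pi < payoff g (upd s (i, pi, j) o) i pi) =
  (Pv i pi (s i pi j) (load s i pi (s i pi j)) < Pv i pi o (load s i pi o).+1).
Proof.
move=> V xcu al ne; rewrite payoff_upd //.
apply/idP/idP => H; lra.
Qed.

Lemma gainLe (s : prof) i pi j o o' :
  valid_profile g s -> is_cu g (i, pi, j) ->
  allowed_dev g s (i, pi, j) o -> o != s i pi j ->
  allowed_dev g s (i, pi, j) o' -> o' != s i pi j ->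
  payoff g (upd s (i, pi, j) o) i pi <= payoff g (upd s (i, pi, j) o') i pi ->
  Pv i pi o (load s i pi o).+1 <= Pv i pi o' (load s i pi o').+1.
Proof. move=> V xcu al ne al' ne'; rewrite !payoff_upd //; lra. Qed.

Definition INV (s : prof) t h :=
  [/\ valid_profile g s, Dlt s t h & forall i pi j, Mu (i, pi, j) -> BH s i pi j].

Definition Allgood (s : prof) :=
  forall i pi j, Mu (i, pi, j) -> best_responding g s (i, pi, j).

Lemma final (s : prof) t : INV s t t -> Allgood s.
Proof.
case=> V D BHs i pi j Mx o al.
have xcu := Mcu Mx.
case: (eqVneq o (s i pi j)) => [->|ne]; first by rewrite upd_id ltxx.
rewrite /=; apply/negP; rewrite gainE // !(Dlt_eq _ _ _ D) -leNgt.
exact: BHs i pi j Mx o al (elimN eqP ne).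
Qed.

Lemma BR_BH i pi j : best_responding g s1 (i, pi, j) -> valid_profile g s1 ->
  is_cu g (i, pi, j) -> BH s1 i pi j.
Proof.
move=> br V xcu o al ne.
have := br o al; rewrite gainE //; last exact/eqP.
by rewrite /= /Nb leNgt => /negP.
Qed.

Definition cnt (d : nat) (s : prof) i pi j :=
  #|[set o : option Omega | Pv i pi (s i pi j) (Nb i pi (s i pi j) + d) < Pv i pi o (Nb i pi o + d)]|.

Definition meas (d : nat) (s : prof) :=
  (\sum_(i : N) \sum_(pi : {set Omega}) \sum_(jj < K g i) cnt d s i pi jj.+1)%N.

Lemma cnt_lt d (s : prof) i pi j y :
  Pv i pi (s i pi j) (Nb i pi (s i pi j) + d) < Pv i pi y (Nb i pi y + d) ->
  (cnt d (upd s (i, pi, j) y) i pi j < cnt d s i pi j)%N.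
Proof.
move=> lt; rewrite /cnt /upd eqxx; apply: proper_card; apply/properP; split.
- by apply/subsetP => o; rewrite !inE => /(lt_trans lt).
- by exists y; rewrite !inE ?lt ?ltxx.
Qed.

Lemma cnt_same d (s : prof) i pi j y i' pi' j' :
  (i', pi', j') != (i, pi, j) ->
  cnt d (upd s (i, pi, j) y) i' pi' j' = cnt d s i' pi' j'.
Proof. by move=> ne; rewrite /cnt /upd ifN. Qed.

Lemma meas_lt d (s : prof) i pi j y :
  is_cu g (i, pi, j) ->
  Pv i pi (s i pi j) (Nb i pi (s i pi j) + d) < Pv i pi y (Nb i pi y + d) ->
  (meas d (upd s (i, pi, j) y) < meas d s)%N.
Proof.
move=> xcu lt; have [_ j0 jK] := cuP xcu.
have jK' : (j.-1 < K g i)%N by lia.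
have le : forall i' pi' j', (cnt d (upd s (i, pi, j) y) i' pi' j' <= cnt d s i' pi' j')%N.
  move=> i' pi' j'; case: (eqVneq (i', pi', j') (i, pi, j)) => [[-> -> ->]|ne].
  - exact: ltnW (cnt_lt lt).
  - by rewrite cnt_same.
rewrite /meas; apply: (sum_lt (i0 := i)) => [i'|].
  by apply: sum_le => pi'; apply: sum_le => jj; apply: le.
apply: (sum_lt (i0 := pi)) => [pi'|].
  by apply: sum_le => jj; apply: le.
apply: (sum_lt (i0 := Ordinal jK')) => [jj|]; first exact: le.
by rewrite /= prednK //; apply: cnt_lt.
Qed.

Lemma best_reply (s : prof) i pi j : exists y, allowed_dev g s (i, pi, j) y /\
  forall o, allowed_dev g s (i, pi, j) o ->
    payoff g (upd s (i, pi, j) o) i pi <= payoff g (upd s (i, pi, j) y) i pi.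
Proof.
have := @fin_max (option Omega) (allowed_dev g s (i, pi, j))
  (fun o => payoff g (upd s (i, pi, j) o) i pi) None (or_introl erefl).
by case=> y [al H]; exists y.
Qed.

Lemma no_imp (s : prof) t h i pi j o :
  Dlt s t h -> is_cu g (i, pi, j) -> BH s i pi j ->
  allowed_dev g s (i, pi, j) o -> o <> s i pi j ->
  res i pi (s i pi j) != t -> res i pi o != h ->
  Pv i pi o (load s i pi o).+1 <= Pv i pi (s i pi j) (load s i pi (s i pi j)).
Proof.
move=> D xcu bh al ne rt rh.
apply: le_trans (@Pv_mono i pi j o (Nb i pi o).+1 (load s i pi o).+1 xcu _) _.
  by rewrite ltnS; exact: Dlt_nh D rh.
apply: le_trans (bh o al ne) _.
apply: Pv_mono xcu _; exact: Dlt_nt D rt.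
Qed.

Lemma ntm_core (s : prof) t h i pi jp jw o :
  Dlt s t h -> is_cu g (i, pi, jw) -> BH s i pi jw ->
  res i pi (s i pi jw) != h -> res i pi (s i pi jp) = t ->
  Pv i pi (s i pi jw) (load s i pi (s i pi jw)) <
  Pv i pi (s i pi jp) (load s i pi (s i pi jp)) ->
  allowed_dev g s (i, pi, jw) o -> o <> s i pi jw ->
  Pv i pi o (Nb i pi o).+1 < Pv i pi (s i pi jp) (load s i pi (s i pi jp)).
Proof.
move=> D wcu bh rh rt lt al ne.
have rwt : res i pi (s i pi jw) != t.
  apply/negP => /eqP e; move: lt; rewrite (res_inj (etrans e (esym rt))) ltxx //.
apply: le_lt_trans (bh o al ne) _; apply: le_lt_trans _ lt.
have -> : Nb i pi (s i pi jw) = load s i pi (s i pi jw).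
  by apply/eqP; rewrite eqn_leq (Dlt_nh D rh) (Dlt_nt D rwt).
by [].
Qed.

Definition TB (s : prof) t h :=
  forall i pi j, Mu (i, pi, j) -> res i pi (s i pi j) = t ->
  forall o, allowed_dev g s (i, pi, j) o -> o <> s i pi j -> res i pi o != h ->
  Pv i pi o (load s i pi o).+1 <= Pv i pi (s i pi j) (load s i pi (s i pi j)).

Definition Good (s : prof) := exists s', reach s s' /\ Allgood s'.

Lemma good_step (s : prof) i pi j y :
  valid_profile g s -> is_cu g (i, pi, j) -> allowed_dev g s (i, pi, j) y ->
  y != s i pi j ->
  Pv i pi (s i pi j) (load s i pi (s i pi j)) < Pv i pi y (load s i pi y).+1 ->
  Good (upd s (i, pi, j) y) -> Good s.
Proof.
move=> V xcu al ne lt [s' [r ag]]; exists s'; split => //.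
apply: reachS r; last exact: valid_upd.
by apply: step_upd => //; rewrite gainE.
Qed.

Lemma notTMy (s : prof) i pi j y : ~ TMy s i pi j y ->
  exists jw, [/\ Mu (i, pi, jw), jw <> j, allowed_dev g s (i, pi, jw) y, y <> s i pi jw &
    Pv i pi (s i pi jw) (load s i pi (s i pi jw)) <
    Pv i pi (s i pi j) (load s i pi (s i pi j))].
Proof.
move=> nt; apply: NNPP => nex; apply: nt => jw Mw nj al ne.
rewrite leNgt; apply/negP => lt; apply: nex; by exists jw.
Qed.

Lemma Dlt_h (s : prof) t h i pi o : Dlt s t h -> t != h -> res i pi o = h ->
  (load s i pi o).+1 = Nb i pi o.
Proof.
move=> D nth ro; move: (D i pi o); rewrite ro eqxx.
have -> : (h == t) = false by rewrite eq_sym; exact: negbTE.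
by rewrite addn0 addn1.
Qed.

Lemma Dlt_t (s : prof) t h i pi o : Dlt s t h -> t != h -> res i pi o = t ->
  load s i pi o = (Nb i pi o).+1.
Proof.
move=> D nth ro; move: (D i pi o); rewrite ro eqxx (negbTE nth).
by rewrite addn0 addn1.
Qed.

Lemma Dlt_n (s : prof) t h i pi o : Dlt s t h -> res i pi o != t -> res i pi o != h ->
  load s i pi o = Nb i pi o.
Proof. by move=> D rt rh; apply/eqP; rewrite eqn_leq (Dlt_nt D rt) (Dlt_nh D rh). Qed.

Lemma Hphase n : forall (s : prof) t h, (meas 0 s < n)%N -> INV s t h -> t != h ->
  TB s t h -> Good s.
Proof.
elim: n => [//|n IH] s t h mlt [V D BHs] nth tb.
case: (classic (exists i pi j o, [/\ Mu (i, pi, j), allowed_dev g s (i, pi, j) o,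
    o <> s i pi j, res i pi o = h &
    Pv i pi (s i pi j) (load s i pi (s i pi j)) < Pv i pi o (load s i pi o).+1]))
  => [[i [pi [jp [oh [Mp alp nep roh imp]]]]] | nW]; last first.
-
  exists s; split; first exact: reach0.
  move=> i pi j Mx o al; have xcu := Mcu Mx.
  rewrite /=; apply/negP.
  case: (eqVneq o (s i pi j)) => [->|ne]; first by rewrite upd_id ltxx.
  rewrite gainE // -leNgt.
  case: (eqVneq (res i pi o) h) => [roh|rnh].
  + rewrite leNgt; apply/negP => lt; apply: nW; exists i, pi, j, o; split => //.
    exact/eqP.
  + case: (eqVneq (res i pi (s i pi j)) t) => [rt|rnt].
    * exact: tb i pi j Mx rt o al (elimN eqP ne) rnh.
    * exact: no_imp D xcu (BHs _ _ _ Mx) al (elimN eqP ne) rnt rnh.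
have BHo : forall i' pi' j', Mu (i', pi', j') -> forall x : cuT, (i', pi', j') <> x ->
    BH s i' pi' j' by move=> i' pi' j' M' _ _; exact: BHs.
case: (classic (exists i' pi' j' o', [/\ Mu (i', pi', j'), allowed_dev g s (i', pi', j') o',
    o' <> s i' pi' j', res i' pi' o' = h &
    [/\ Pv i' pi' (s i' pi' j') (load s i' pi' (s i' pi' j')) < Pv i' pi' o' (load s i' pi' o').+1,
    res i' pi' (s i' pi' j') = t & TMy s i' pi' j' o']]))
  => [[i' [pi' [j' [o' [M' al' ne' ro' [imp' rt' tm']]]]]] | nA].
- (* annihilation *)
  have xcu := Mcu M'.
  have ne'' : o' != s i' pi' j' by apply/eqP.
  have best : forall o, allowed_dev g s (i', pi', j') o -> o != s i' pi' j' ->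
      Pv i' pi' o (load s i' pi' o).+1 <= Pv i' pi' o' (load s i' pi' o').+1.
    move=> o al ne; case: (eqVneq (res i' pi' o) h) => [ro|rno].
    + by rewrite (res_inj (etrans ro (esym ro'))).
    + exact: le_trans (tb i' pi' j' M' rt' o al (elimN eqP ne) rno) (ltW imp').
  apply: (good_step V xcu al' ne'' imp').
  exists (upd s (i', pi', j') o'); split; first exact: reach0.
  apply: (@final _ h); split; first exact: valid_upd.
  + by have := (Dlt_move V xcu al' ne'' D).1 rt'; rewrite ro'.
  + apply: (move_BH V D xcu (fun i1 pi1 j1 M1 _ => BHs i1 pi1 j1 M1) (or_introl (BHs _ _ _ M')) al' ne'' best imp').
    by right.
- (* a team-minimal H-move in the cell of p *)
  have pcu := Mcu Mp.
  have [_ jp0 jpK] := cuP pcu.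
  have jpK' : (jp.-1 < K g i)%N by lia.
  pose Pc (k : 'I_(K g i)) := [/\ Mu (i, pi, k.+1), allowed_dev g s (i, pi, k.+1) oh &
                                   oh <> s i pi k.+1].
  have Pc0 : Pc (Ordinal jpK') by rewrite /Pc /= prednK.
  have [k [[Mu_ alu neu] kmin]] := @fin_max _ Pc
    (fun k => - Pv i pi (s i pi k.+1) (load s i pi (s i pi k.+1))) _ Pc0.
  set ju := k.+1 in Mu_ alu neu kmin.
  have ucu := Mcu Mu_.
  set pu := s i pi ju in alu neu kmin.
  have minu : forall jw, Mu (i, pi, jw) -> allowed_dev g s (i, pi, jw) oh -> oh <> s i pi jw ->
      Pv i pi pu (load s i pi pu) <= Pv i pi (s i pi jw) (load s i pi (s i pi jw)).
    move=> jw Mw alw new; have [_ jw0 jwK] := cuP (Mcu Mw).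
    have jwK' : (jw.-1 < K g i)%N by lia.
    have := kmin (Ordinal jwK'); rewrite /Pc /= prednK // lerN2; apply; split => //.
  have tmu : TMy s i pi ju oh.
    by move=> jw Mw _ alw new; apply: minu.
  have impu : Pv i pi pu (load s i pi pu) < Pv i pi oh (load s i pi oh).+1.
    exact: le_lt_trans (minu _ Mp alp nep) imp.
  have neu' : oh != pu by apply/eqP.
  have rnt : res i pi pu != t.
    apply/negP => /eqP rt; apply: nA; exists i, pi, ju, oh; split => //.
  have rnh : res i pi pu != h.
    apply/negP => /eqP e; apply: neu; exact: res_inj (etrans roh (esym e)).
  have best : forall o, allowed_dev g s (i, pi, ju) o -> o != pu ->
      Pv i pi o (load s i pi o).+1 <= Pv i pi oh (load s i pi oh).+1.
    move=> o al ne; case: (eqVneq (res i pi o) h) => [ro|rno].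
    + by rewrite (res_inj (etrans ro (esym roh))).
    + exact: le_trans (no_imp D ucu (BHs _ _ _ Mu_) al (elimN eqP ne) rnt rno) (ltW impu).
  apply: (good_step V ucu alu neu' impu).
  set s' := upd s (i, pi, ju) oh.
  have V' : valid_profile g s' by exact: valid_upd.
  have D' : Dlt s' t (res i pi pu) by exact: (Dlt_move V ucu alu neu' D).2 roh.
  have BH' := move_BH V D ucu (fun i1 pi1 j1 M1 _ => BHs i1 pi1 j1 M1) (or_introl (BHs _ _ _ Mu_)) alu neu' best impu
    (or_intror tmu).
  apply: (IH s' t (res i pi pu)).
  + have ml : (meas 0 s' < meas 0 s)%N.
      apply: meas_lt => //.
      rewrite !addn0 -(Dlt_h D nth roh) -(Dlt_n D rnt rnh); exact: impu.
    by apply: leq_trans ml _; rewrite -ltnS.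
  + by split.
  + by rewrite eq_sym.
  +
    move=> iq piq jq Mq rq o al' ne' ro.
    have qne : (iq, piq, jq) != (i, pi, ju).
      apply/negP => /eqP [e1 e2 e3]; subst iq piq jq.
      move: rq; rewrite /s' /upd eqxx roh => eht; by move: nth; rewrite eht eqxx.
    have sq : s' iq piq jq = s iq piq jq by rewrite /s' /upd ifN.
    rewrite sq in rq ne' *.
    have LU := fun r => load_upd iq piq r V ucu alu neu'.
    rewrite -/s' -/pu in LU.
    have Lq : load s' iq piq (s iq piq jq) = load s iq piq (s iq piq jq).
      have := LU (s iq piq jq); rewrite rq roh (negbTE nth).
      have -> : (t == res i pi pu) = false by apply/negP => /eqP e; move: rnt; rewrite -e eqxx.
      by rewrite !addn0.
    rewrite Lq.
    case: (allowed_upd al') => [al|[e1 e2 _ eo]]; last first.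
      by subst iq piq; move: ro; rewrite eo eqxx.
    have qcu := Mcu Mq.
    case: (eqVneq (res iq piq o) h) => [roq|rnq].
    * have Lo : (load s' iq piq o).+1 = (Nb iq piq o).+1.
        have := LU o; rewrite (negbTE ro) roq roh eqxx addn0 => e.
        by rewrite e addn1 (Dlt_h D nth roq).
      rewrite Lo.
      case: (leP (Pv iq piq o (load s iq piq o).+1)
                 (Pv iq piq (s iq piq jq) (load s iq piq (s iq piq jq)))) => [le|gt].
      - apply: le_trans _ le; rewrite (Dlt_h D nth roq).
        by apply: Pv_mono qcu _.
      - have ntm : ~ TMy s iq piq jq o.
          move=> tm; apply: nA; exists iq, piq, jq, o; split => //.
        have [jw [Mw njw alw now ltw]] := notTMy ntm.
        have wcu := Mcu Mw.
        have rwh : res iq piq (s iq piq jw) != h.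
          apply/negP => /eqP e; apply: now; exact: res_inj (etrans roq (esym e)).
        exact: ltW (ntm_core D wcu (BHs _ _ _ Mw) rwh rq ltw alw now).
    * have Lo : load s' iq piq o = load s iq piq o.
        have := LU o; rewrite roh (negbTE ro) (negbTE rnq) !addn0 //.
      rewrite Lo; exact: tb iq piq jq Mq rq o al ne' rnq.
Qed.

Lemma Tphase n : forall (s : prof) t h, (meas 1 s < n)%N -> INV s t h -> Good s.
Proof.
elim: n => [//|n IH] s t h mlt [V D BHs].
case: (eqVneq t h) => [eth|nth].
  exists s; split; first exact: reach0.
  apply: (@final _ t); split => //; by rewrite {2}eth.
case: (classic (exists i pi j o, [/\ Mu (i, pi, j), res i pi (s i pi j) = t,
    allowed_dev g s (i, pi, j) o, o <> s i pi j &
    res i pi o != h /\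
    Pv i pi (s i pi j) (load s i pi (s i pi j)) < Pv i pi o (load s i pi o).+1]))
  => [[i [pi [j [o [Mx rt al ne [rno impo]]]]]] | nT]; last first.
  have TBs : TB s t h.
    move=> i pi j Mx rt o al ne rno; rewrite leNgt; apply/negP => lt; apply: nT.
    by exists i, pi, j, o; split.
  exact: (@Hphase (meas 0 s).+1 s t h (ltnSn _) (And3 V D BHs) nth TBs).
have xcu := Mcu Mx.
have [y [aly besty]] := best_reply s i pi j.
have neo : o != s i pi j by apply/eqP.
have hy : payoff g s i pi < payoff g (upd s (i, pi, j) y) i pi.
  apply: lt_le_trans (besty o al); by rewrite gainE.
have ney : y != s i pi j by apply/eqP => e; move: hy; rewrite e upd_id ltxx.
have imp : Pv i pi (s i pi j) (load s i pi (s i pi j)) < Pv i pi y (load s i pi y).+1.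
  by rewrite -gainE.
have best : forall o', allowed_dev g s (i, pi, j) o' -> o' != s i pi j ->
    Pv i pi o' (load s i pi o').+1 <= Pv i pi y (load s i pi y).+1.
  by move=> o' al' ne'; exact: (gainLe V xcu al' ne' aly ney (besty o' al')).
have BHo : forall i1 pi1 j1, Mu (i1, pi1, j1) -> (i1, pi1, j1) <> (i, pi, j) -> BH s i1 pi1 j1.
  by move=> i1 pi1 j1 M1 _; exact: BHs.
apply: (good_step V xcu aly ney imp).
case: (eqVneq (res i pi y) h) => [ryh|ryn].
- (* annihilation *)
  have tm : TMy s i pi j y.
    apply: NNPP => ntm; have [jw [Mw njw alw ney' ltw]] := notTMy ntm.
    have wcu := Mcu Mw.
    have rwh : res i pi (s i pi jw) != h.
      apply/negP => /eqP e; apply: ney'; exact: res_inj (etrans ryh (esym e)).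
    have alwo : allowed_dev g s (i, pi, jw) o by apply: allowed_team al neo.
    case: (eqVneq o (s i pi jw)) => [eo|neow].
    + have := lt_le_trans impo (Pv_mono o xcu (leqnSn _)).
      by rewrite eo => /(lt_trans ltw); rewrite ltxx.
    + have := ntm_core D wcu (BHs _ _ _ Mw) rwh rt ltw alwo (elimN eqP neow).
      have rot : res i pi o != t.
        apply/negP => /eqP e; apply: ne; exact: res_inj (etrans e (esym rt)).
      rewrite -(Dlt_n D rot rno) => /(lt_trans impo); by rewrite ltxx.
  exists (upd s (i, pi, j) y); split; first exact: reach0.
  apply: (@final _ h); split; first exact: valid_upd.
  + by have := (Dlt_move V xcu aly ney D).1 rt; rewrite ryh.
  + exact: (move_BH V D xcu BHo (or_introl (BHs _ _ _ Mx)) aly ney best imp (or_intror tm)).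
- (* token move *)
  have ryt : res i pi y != t.
    apply/negP => /eqP e; move: ney; rewrite (res_inj (etrans e (esym rt))) eqxx //.
  apply: (IH _ (res i pi y) h).
  + have ml : (meas 1 (upd s (i, pi, j) y) < meas 1 s)%N.
      apply: meas_lt => //.
      rewrite !addn1 -(Dlt_t D nth rt) -(Dlt_n D ryt ryn); exact: imp.
    by apply: leq_trans ml _; rewrite -ltnS.
  + split; first exact: valid_upd.
    * exact: (Dlt_move V xcu aly ney D).1 rt.
    * exact: (move_BH V D xcu BHo (or_introl (BHs _ _ _ Mx)) aly ney best imp
                (or_introl (Dlt_nh D ryn))).
Qed.

Lemma main_good : valid_profile g s1 ->
  (forall b, B b -> best_responding g s1 b) -> Good s1.
Proof.
move=> V BR.
case: (classic (best_responding g s1 a)) => [bra|nbra].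
  exists s1; split; first exact: reach0.
  by move=> i pi j [/BR //|->].
have ea : a = (a.1.1, a.1.2, a.2) by case: (a) => [[]].
set ia := a.1.1 in ea; set pia := a.1.2 in ea; set ja := a.2 in ea.
have acu : is_cu g (ia, pia, ja) by rewrite -ea.
have [o [al impo]] : exists o, allowed_dev g s1 (ia, pia, ja) o /\
    payoff g s1 ia pia < payoff g (upd s1 (ia, pia, ja) o) ia pia.
  apply: NNPP => nex; apply: nbra; rewrite ea => o al /= lt; apply: nex; by exists o.
have [y [aly besty]] := best_reply s1 ia pia ja.
have hy : payoff g s1 ia pia < payoff g (upd s1 (ia, pia, ja) y) ia pia.
  exact: lt_le_trans impo (besty o al).
have ney : y != s1 ia pia ja by apply/eqP => e; move: hy; rewrite e upd_id ltxx.
have imp : Pv ia pia (s1 ia pia ja) (load s1 ia pia (s1 ia pia ja)) <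
           Pv ia pia y (load s1 ia pia y).+1 by rewrite -gainE.
have best : forall o', allowed_dev g s1 (ia, pia, ja) o' -> o' != s1 ia pia ja ->
    Pv ia pia o' (load s1 ia pia o').+1 <= Pv ia pia y (load s1 ia pia y).+1.
  by move=> o' al' ne'; exact: (gainLe V acu al' ne' aly ney (besty o' al')).
set r0 := res ia pia (s1 ia pia ja).
have D := Dlt_init r0.
have BHo : forall i1 pi1 j1, Mu (i1, pi1, j1) -> (i1, pi1, j1) <> (ia, pia, ja) ->
    BH s1 i1 pi1 j1.
  move=> i1 pi1 j1 [Bw|ew] nw; last by exfalso; apply: nw; rewrite -ea.
  apply: BR_BH; [exact: BR | exact: V | exact: HB].
apply: (good_step V acu aly ney imp).
apply: (@Tphase (meas 1 (upd s1 (ia, pia, ja) y)).+1 _ (res ia pia y) r0) => //.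
split; first exact: valid_upd.
- exact: (Dlt_move V acu aly ney D).1 erefl.
- exact: (move_BH V D acu BHo (or_intror erefl) aly ney best imp (or_introl (leqnn _))).
Qed.

End Main.
End Proof.

Unset Implicit Arguments.
Set Strict Implicit.

Theorem lemma1 (N Omega : finType) (R : realFieldType) (g : search_game N Omega R)
    (Hg : is_search_game g) (B : cu N Omega -> Prop) (a : cu N Omega)
    (s1 : profile N Omega) :
  (forall b, B b -> is_cu g b) -> is_cu g a -> ~ B a ->
  valid_profile g s1 ->
  (forall b, B b -> best_responding g s1 b) ->
  exists (T : nat) (sq : nat -> profile N Omega),
    [/\ sq 0%N = s1,
        (forall t, (t <= T)%N -> valid_profile g (sq t)),
        (forall t, (t < T)%N -> improvement_step g (sq t) (sq t.+1))
      & (forall b, B b \/ b = a -> best_responding g (sq T) b)].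
Proof.
move=> HB Ha _ V BR.
have [s' [r ag]] := main_good Hg HB Ha V BR.
have [T [sq [e0 Vs Ss eT]]] := reach_seq V r.
exists T, sq; split => // b Mb; rewrite eT.
by case: b Mb => [[i pi] j] Mb; exact: ag i pi j Mb.
Qed.
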